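(* For integers $n\ge m\ge0$ of the same parity, \[ d_{n,m}=\frac{1}{((n+m)/2)!}\,r_{(n+m)/2,(n-m)/2}, \] and $d_{n,m}=0$ when $n$ and $m$ have different parities. In particular, the number of relaxed binary trees of size $n$ equals $n!\,d_{2n,0}$.
   Context: A Dyck meander is a lattice path from $(0,0)$ with steps $U=(1,1)$, $D=(1,-1)$ never going below $y=0$; an up step starting at $(a,b)$ has weight $(a-b+2)/(a+b+2)$, a meander's weight is the product of its up-step weights, and $d_{n,m}$ is the total weight of meanders ending at $(n,m)$. A horizontally decorated path is a lattice path from $(0,0)$ with steps $H=(1,0)$, $V=(0,1)$ in the region $0\le y\le x$, each $H$ step decorated by a number in $\{1,\dots,k+1\}$ where $k$ is its $y$-coordinate; $r_{a,b}$ is the number of horizontally decorated paths ending at $(a,b)$. A relaxed binary tree of size $n$ is obtained from a rooted plane binary tree with $n$ internal nodes (its spine) by keeping the left-most leaf and turning every other leaf $\ell$ into a pointer to a vertex (an internal node or the left-most leaf) preceding $\ell$ in postorder (left subtree, right subtree, root); two relaxed trees are equal iff they have the same spine and the same pointer targets. *)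

(* Defs.v *)
From mathcomp Require Import all_boot all_order all_algebra.
From Stdlib Require List.
Unset Strict Implicit. Unset Printing Implicit Defensive.
Import GRing.Theory Num.Theory.

(** * Dyck meanders.  A step sequence is a [seq bool], [true] = U = (1,1),
    [false] = D = (1,-1).  The i-th step starts at (i, mh s i). *)

Definition mh (s : seq bool) (i : nat) : int :=
  (\sum_(j < i) (if nth false s j then 1 else -1))%R.

Definition is_meander (s : seq bool) : bool :=
  [forall i : 'I_(size s).+1, (0 <= mh s i)%R].

Definition up_weight (a : nat) (b : int) : rat :=
  (((a%:Z - b + 2)%:~R) / ((a%:Z + b + 2)%:~R))%R.

Definition mweight (s : seq bool) : rat :=
  (\prod_(i < size s | nth false s i) up_weight i (mh s i))%R.

Definition dnm (n m : nat) : rat :=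
  (\sum_(s : n.-tuple bool | is_meander s && (mh s n == m%:Z)) mweight s)%R.

(** A path ending at (a,b) has a+b steps;
    a step is [Some d] (an H step decorated by the number d+1, d : 'I_(b+1))
    or [None] (a V step).  Decorations of H steps at height k must lie in
    {1,...,k+1}, i.e. d <= k; since k <= b along the path, 'I_(b+1) suffices. *)

Definition hx {T} (s : seq (option T)) (i : nat) : nat :=
  count (fun o => if o is Some _ then true else false) (take i s).
Definition hy {T} (s : seq (option T)) (i : nat) : nat :=
  count (fun o => if o is Some _ then false else true) (take i s).

Definition is_hdpath (a b : nat) (s : seq (option 'I_b.+1)) : bool :=
  [&& [forall i : 'I_(size s).+1, hy s i <= hx s i],
      (hx s (size s) == a), (hy s (size s) == b)
    & [forall i : 'I_(size s),
         if nth None s i is Some d then (d <= hy s i)%N else true]].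

Definition rab (a b : nat) : nat :=
  #|[set t : (a + b).-tuple (option 'I_b.+1) | @is_hdpath a b t]|.

Inductive btree : Type := Leaf | Node (l r : btree).

Fixpoint bsize (t : btree) : nat :=
  match t with Leaf => 0 | Node l r => (bsize l + bsize r).+1 end.

Fixpoint post (t : btree) : seq bool :=
  match t with Leaf => [:: false] | Node l r => post l ++ post r ++ [:: true] end.

Definition leaf_pos (t : btree) : seq nat :=
  [seq i <- iota 0 (size (post t)) | ~~ nth true (post t) i].

Definition leftmost_pos (t : btree) : nat := head 0%N (leaf_pos t).

(* A relaxed tree is a spine t together with the list of pointer targets
   (postorder positions) of the non-left-most leaves, listed in postorder. *)
Definition is_relaxed (n : nat) (x : btree * seq nat) : Prop :=
  let: (t, ptr) := x in
  [/\ bsize t = n,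
      size ptr = size (behead (leaf_pos t))
    & all2 (fun q p => (p < q)%N && (nth false (post t) p || (p == leftmost_pos t)))
           (behead (leaf_pos t)) ptr].

(* Main.v *)
From HB Require Import structures.
Require Import Defs.
From mathcomp Require Import all_boot all_order all_algebra.
From mathcomp Require Import zify ring lra.
From Stdlib Require List.
Import GRing.Theory Num.Theory.
Set Implicit Arguments.

Section TupleSum.
Variables (R : Type) (idx : R) (op : Monoid.com_law idx) (A : finType).

Lemma big_tuple_cons k (F : seq A -> R) :
  \big[op/idx]_(t : k.+1.-tuple A) F t =
  \big[op/idx]_(c : A) \big[op/idx]_(t : k.-tuple A) F (c :: t).
Proof.
rewrite pair_big /=.
rewrite (reindex (fun p : A * k.-tuple A => [tuple of p.1 :: p.2])) /=; first by [].
exists (fun t : k.+1.-tuple A => (thead t, [tuple of behead t])).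
  by move=> [c t] _ /=; congr pair; apply: val_inj.
by move=> t _; apply: val_inj => /=; rewrite [in RHS](tuple_eta t).
Qed.

Lemma big_tuple_rcons k (F : seq A -> R) :
  \big[op/idx]_(t : k.+1.-tuple A) F t =
  \big[op/idx]_(t : k.-tuple A) \big[op/idx]_(c : A) F (rcons t c).
Proof.
have revI n : injective (fun t : n.-tuple A => [tuple of rev t]).
  by move=> t1 t2 /(congr1 val) /= H; apply: val_inj; rewrite -[val t1]revK H revK.
rewrite (reindex_inj (revI k.+1)) /=.
have := big_tuple_cons k (fun s => F (rev s)); rewrite /= => ->.
rewrite exchange_big /= (reindex_inj (revI k)) /=.
by apply: eq_bigr => t _; apply: eq_bigr => c _; rewrite rev_cons revK.
Qed.

Lemma big_tuple0 (F : seq A -> R) :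
  \big[op/idx]_(t : 0.-tuple A) F t = F [::].
Proof.
rewrite (big_pred1 [tuple]) //.
move=> t; symmetry; apply/eqP; apply: val_inj; by case: t => [[]].
Qed.
End TupleSum.

Lemma big_optionT (R : Type) (idx : R) (op : Monoid.com_law idx) (T : finType)
  (F : option T -> R) :
  \big[op/idx]_(o : option T) F o = op (F None) (\big[op/idx]_(x : T) F (Some x)).
Proof.
rewrite (bigD1 None) //= (reindex_omap Some id) /=; last by case.
by under eq_bigl => x do rewrite eqxx.
Qed.

Lemma forall_ordS n (P : nat -> bool) :
  [forall i : 'I_n.+1, P i] = [forall i : 'I_n, P i] && P n.
Proof.
apply/forallP/andP => [H|[/forallP H Hn] i].
  split; last exact: (H ord_max).
  by apply/forallP => i; exact: (H (widen_ord (leqnSn n) i)).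
case: (ltnP i n) => [lt|ge]; first exact: (H (Ordinal lt)).
have -> : (i : nat) = n by apply/eqP; rewrite eqn_leq ge -ltnS ltn_ord.
exact: Hn.
Qed.

Local Open Scope ring_scope.

Lemma mh_rcons s c i : (i <= size s)%N -> mh (rcons s c) i = mh s i.
Proof.
move=> hi; rewrite /mh; apply: eq_bigr => j _.
by rewrite nth_rcons (leq_trans (ltn_ord j) hi).
Qed.

Lemma mhS s i : mh s i.+1 = mh s i + (if nth false s i then 1 else -1).
Proof. by rewrite /mh big_ord_recr. Qed.

Lemma mh_rcons_end s c :
  mh (rcons s c) (size s).+1 = mh s (size s) + (if c then 1 else -1).
Proof. by rewrite mhS mh_rcons // nth_rcons ltnn eqxx. Qed.

Lemma meander_rcons s c : is_meander (rcons s c) =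
  is_meander s && (0 <= mh s (size s) + (if c then 1 else -1)).
Proof.
rewrite /is_meander size_rcons (forall_ordS _ (fun i => 0 <= mh (rcons s c) i)).
rewrite mh_rcons_end; congr andb; apply: eq_forallb => i.
by rewrite mh_rcons // -ltnS.
Qed.

Lemma meander_end s : is_meander s -> 0 <= mh s (size s).
Proof. by move=> /forallP /(_ ord_max). Qed.

Lemma mweight_rcons s c : mweight (rcons s c) =
  mweight s * (if c then up_weight (size s) (mh s (size s)) else 1).
Proof.
rewrite /mweight size_rcons big_mkcond big_ord_recr /= [in RHS]big_mkcond.
rewrite nth_rcons ltnn eqxx mh_rcons //; congr (_ * _).
apply: eq_bigr => i _; rewrite nth_rcons ltn_ord mh_rcons //.
exact: ltnW.
Qed.

Definition Dz n (z : int) : rat :=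
  \sum_(s : n.-tuple bool | is_meander s && (mh s n == z)) mweight s.

Lemma dnmE n m : dnm n m = Dz n m%:Z. Proof. by []. Qed.

Lemma Dz_rec n z : Dz n.+1 z =
  (if 0 <= z then Dz n (z+1) else 0) + up_weight n (z-1) * Dz n (z-1).
Proof.
rewrite /Dz big_mkcond.
rewrite (@big_tuple_rcons _ _ _ _ _ (fun s : seq bool =>
   if is_meander s && (mh s n.+1 == z) then mweight s else 0)) /=.
rewrite [X in (if _ then X else _)]big_mkcond [X in _ * X]big_mkcond.
rewrite mulr_sumr.
have -> : (if 0 <= z then \sum_(i : n.-tuple bool)
     (if is_meander i && (mh i n == z + 1) then mweight i else 0) else 0) =
   \sum_(i : n.-tuple bool) (if 0 <= z then
     (if is_meander i && (mh i n == z + 1) then mweight i else 0) else 0).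
  by case: (0 <= z); rewrite ?big1_eq.
rewrite -big_split /=; apply: eq_bigr => t _; rewrite big_bool /=.
move: (tval t) (size_tuple t) => s st.
have E c : mh (rcons s c) n.+1 = mh s n + (if c then 1 else -1).
  by rewrite -st mh_rcons_end.
rewrite !E !meander_rcons !mweight_rcons st.
case Hm : (is_meander s) => /=; last by rewrite mulr0 !addr0; case: (0 <= z).
have h0 := @meander_end s Hm; rewrite st in h0.
move: (mh s n) h0 => h h0.
have [e1|e1] := eqVneq (h + 1) z.
  have -> : (h - 1 == z) = false by apply/eqP; lia.
  have -> : (h == z + 1) = false by apply/eqP; lia.
  have -> : (h == z - 1) by apply/eqP; lia.
  have -> : (0 <= h + 1) by lia.
  rewrite -e1 addrK /= andbF addr0; case: (0 <= h + 1); rewrite add0r mulrC //.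
have -> : (h == z - 1) = false by apply/eqP; lia.
rewrite andbF mulr0 add0r addr0.
have [e2|e2] := eqVneq (h - 1) z.
  have -> : (h == z + 1) by apply/eqP; lia.
  by rewrite e2 andbT mulr1.
have -> : (h == z + 1) = false by apply/eqP; move/eqP: e2; lia.
by rewrite andbF; case: (0 <= z).
Qed.

Lemma Dz_neg n z : z < 0 -> Dz n z = 0.
Proof.
move=> hz; rewrite /Dz big1 // => t /andP[Hm /eqP e].
have := @meander_end t Hm; rewrite size_tuple e; lia.
Qed.

Lemma Dz0 z : Dz 0 z = (z == 0)%:R.
Proof.
rewrite /Dz big_mkcond (@big_tuple0 _ _ _ _ (fun s : seq bool =>
   if is_meander s && (mh s 0 == z) then mweight s else 0)) /=.
rewrite /is_meander /mh /mweight /= big_ord0 big_ord0.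
have -> : [forall i : 'I_1, (0 <= \sum_(j < i) (if nth false [::] j then 1 else -1) :> int)].
  by apply/forallP => i; rewrite (ord1 i) big_ord0.
by rewrite eq_sym; case: (z == 0).
Qed.

Close Scope ring_scope.

Fixpoint Rk (k x y : nat) : nat :=
  match k with
  | 0 => (x == 0) && (y == 0)
  | k'.+1 => (if x is x'.+1 then y.+1 * Rk k' x' y else 0) +
             (if y is y'.+1 then (y <= x) * Rk k' x y' else 0)
  end.

Lemma Rk_gt k x y : x + y != k -> Rk k x y = 0.
Proof.
elim: k x y => [|k IH] x y /=; first by case: x; case: y.
move=> h; rewrite (_ : (if x is x'.+1 then _ else _) = 0); last first.
  by case: x h => // x h; rewrite IH ?muln0 //; lia.
by case: y h => // y h; rewrite IH ?muln0 //; lia.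
Qed.

Lemma Rk_lt k x y : x < y -> Rk k x y = 0.
Proof.
elim: k x y => [|k IH] x y /=; first by case: x; case: y.
move=> h; rewrite (_ : (if x is x'.+1 then _ else _) = 0); last first.
  by case: x h => // x h; rewrite IH ?muln0 //; lia.
by case: y h => // y h; rewrite leqNgt h.
Qed.

Local Open Scope ring_scope.

Lemma Dz_zero n m : (odd (n + m) || (n < m))%N -> Dz n m%:Z = 0.
Proof.
elim: n m => [|n IH] m.
  by rewrite Dz0; case: m.
move=> h; rewrite Dz_rec (_ : (0 <= m%:Z) = true) //.
rewrite (_ : m%:Z + 1 = (m.+1)%:Z); last by lia.
rewrite IH; last by move: h; rewrite addnS addSn /=; case: (odd (n + m)) => //=; lia.
case: m h => [|m] h; first by rewrite Dz_neg ?mulr0 ?addr0.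
rewrite (_ : (m.+1)%:Z - 1 = m%:Z); last by lia.
rewrite IH ?mulr0 ?addr0 //.
by move: h; rewrite addSn addnS /=; case: (odd (n + m)) => //=; lia.
Qed.

Lemma DzRk n a b : (a + b = n)%N -> (b <= a)%N ->
  Dz n (a - b)%:Z = (Rk n a b)%:R / (a`!)%:R.
Proof.
elim: n a b => [|n IH] a b.
  case: a => [|a]; case: b => [|b] //= _ _; first by rewrite Dz0.
case: a => [|a]; first by case: b.
move=> hab hba; rewrite Dz_rec (_ : (0 <= (a.+1 - b)%:Z) = true) //=.
case: b hab hba => [|b] hab hba.
  rewrite (_ : (a.+1 - 0)%:Z + 1 = (n.+2)%:Z); last by lia.
  rewrite Dz_zero ?add0r; last by rewrite ltnS leqnSn orbT.
  rewrite (_ : (a.+1 - 0)%:Z - 1 = (a - 0)%:Z); last by lia.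
  rewrite IH; try lia.
  rewrite /up_weight.
  rewrite (_ : n%:Z - (a - 0)%:Z + 2 = (2 * 1)%:Z); last by lia.
  rewrite (_ : n%:Z + (a - 0)%:Z + 2 = (2 * a.+1)%:Z); last by lia.
  change (((2 * 1)%N%:R / (2 * a.+1)%N%:R) * ((Rk n a 0)%:R / a`!%:R) =
   ((1 * Rk n a 0 + 0)%N%:R / (a.+1)`!%:R :> rat)).
  rewrite factS !natrM addn0 mul1n.
  field.
  apply/andP; split; first by rewrite pnatr_eq0 -lt0n fact_gt0.
  by rewrite addrC natr1 pnatr_eq0.
rewrite (_ : (a.+1 - b.+1)%:Z + 1 = (a.+1 - b)%:Z); last by lia.
rewrite IH; try lia.
rewrite (_ : (b.+1 <= a.+1)%N = true) //= mul1n.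
have [hb|hb] := leqP b.+1 a.
  rewrite (_ : (a.+1 - b.+1)%:Z - 1 = (a - b.+1)%:Z); last by lia.
  rewrite IH; try lia.
  rewrite /up_weight.
  rewrite (_ : n%:Z - (a - b.+1)%:Z + 2 = (2 * b.+2)%:Z); last by lia.
  rewrite (_ : n%:Z + (a - b.+1)%:Z + 2 = (2 * a.+1)%:Z); last by lia.
  change ((Rk n a.+1 b)%:R / (a.+1)`!%:R + ((2 * b.+2)%N%:R / (2 * a.+1)%N%:R) *
    ((Rk n a b.+1)%:R / a`!%:R) =
   ((b.+2 * Rk n a b.+1 + Rk n a.+1 b)%N%:R / (a.+1)`!%:R :> rat)).
  rewrite factS !natrM natrD natrM.
  field.
  apply/andP; split; first by rewrite pnatr_eq0 -lt0n fact_gt0.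
  by rewrite addrC natr1 pnatr_eq0.
rewrite Dz_neg; last by lia.
rewrite (@Rk_lt n a b.+1) // mulr0 addr0 muln0 add0n.
by [].
Qed.

Close Scope ring_scope.

Lemma take_rcons_le (T : Type) (s : seq T) o i :
  i <= size s -> take i (rcons s o) = take i s.
Proof. by move=> h; rewrite -cats1 takel_cat. Qed.

Lemma take_rcons_end (T : Type) (s : seq T) o :
  take (size s).+1 (rcons s o) = rcons s o.
Proof. by rewrite take_oversize // size_rcons. Qed.

Section HD.
Variable B : nat.
Implicit Types (s : seq (option 'I_B)).

Lemma hx_rcons s o i : i <= size s -> hx (rcons s o) i = hx s i.
Proof. by move=> h; rewrite /hx take_rcons_le. Qed.
Lemma hy_rcons s o i : i <= size s -> hy (rcons s o) i = hy s i.
Proof. by move=> h; rewrite /hy take_rcons_le. Qed.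
Lemma hx_rcons_end s o :
  hx (rcons s o) (size s).+1 = hx s (size s) + (if o is Some _ then 1 else 0).
Proof. by rewrite /hx take_rcons_end take_size -cats1 count_cat /= addn0; case: o. Qed.
Lemma hy_rcons_end s o :
  hy (rcons s o) (size s).+1 = hy s (size s) + (if o is Some _ then 0 else 1).
Proof. by rewrite /hy take_rcons_end take_size -cats1 count_cat /= addn0; case: o. Qed.

Definition hdc (a b : nat) s : bool :=
  [&& [forall i : 'I_(size s).+1, hy s i <= hx s i],
      (hx s (size s) == a), (hy s (size s) == b)
    & [forall i : 'I_(size s),
         if nth None s i is Some d then (d <= hy s i)%N else true]].

Lemma hdc_parts s o :
  ([forall i : 'I_(size (rcons s o)).+1, hy (rcons s o) i <= hx (rcons s o) i] =
   [forall i : 'I_(size s).+1, hy s i <= hx s i] &&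
   (hy s (size s) + (if o is Some _ then 0 else 1) <=
    hx s (size s) + (if o is Some _ then 1 else 0)))
  /\
  ([forall i : 'I_(size (rcons s o)),
      if nth None (rcons s o) i is Some d then (d <= hy (rcons s o) i)%N else true] =
   [forall i : 'I_(size s),
      if nth None s i is Some d then (d <= hy s i)%N else true] &&
   (if o is Some d then (d <= hy s (size s))%N else true)).
Proof.
rewrite size_rcons; split.
  rewrite (forall_ordS _ (fun i => hy (rcons s o) i <= hx (rcons s o) i)).
  rewrite hx_rcons_end hy_rcons_end; congr andb; apply: eq_forallb => i.
  by rewrite hx_rcons ?hy_rcons // -ltnS.
rewrite (forall_ordS _ (fun i => if nth None (rcons s o) i is Some d
     then (d <= hy (rcons s o) i)%N else true)).
rewrite nth_rcons ltnn eqxx hy_rcons //; congr andb; apply: eq_forallb => i.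
by rewrite nth_rcons ltn_ord hy_rcons // ltnW.
Qed.

Lemma hdc_None s x y :
  hdc x y (rcons s None) = [&& 0 < y, y <= x & hdc x y.-1 s].
Proof.
have [E1 E2] := hdc_parts s None.
rewrite /hdc E1 E2 size_rcons hx_rcons_end hy_rcons_end /=.
case: [forall i : 'I_(size s), _]; rewrite ?andbF ?andbT //.
case: [forall i : 'I_(size s).+1, _]; rewrite /= ?andbF //.
lia.
Qed.

Lemma hdc_Some s x y d :
  hdc x y (rcons s (Some d)) = [&& 0 < x, d <= y & hdc x.-1 y s].
Proof.
have [E1 E2] := hdc_parts s (Some d).
rewrite /hdc E1 E2 size_rcons hx_rcons_end hy_rcons_end /=.
case: [forall i : 'I_(size s), _]; rewrite ?andbF ?andbT //.
case R: [forall i : 'I_(size s).+1, _]; rewrite /= ?andbF //.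
have := forallP R ord_max; rewrite /=.
lia.
Qed.

Definition Rg k x y := \sum_(t : k.-tuple (option 'I_B)) (hdc x y t : nat).

Lemma sum_le_ord y : y < B -> \sum_(d : 'I_B) (d <= y : nat) = y.+1.
Proof.
move=> hy; rewrite -(big_mkord xpredT (fun d => (d <= y : nat))).
rewrite (@big_cat_nat _ _ _ y.+1) /=; [|done|done].
rewrite (@eq_big_nat _ _ _ 0 y.+1 _ (fun=> 1%N)); last first.
  by move=> i /andP[_ h]; rewrite -ltnS h.
rewrite (@eq_big_nat _ _ _ y.+1 B _ (fun=> 0%N)); last first.
  by move=> i /andP[h _]; rewrite leqNgt h.
by rewrite big1_eq sum_nat_const_nat addn0 subn0 muln1.
Qed.

Lemma Rg_rec k x y : y < B -> Rg k.+1 x y =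
  (if x is x'.+1 then y.+1 * Rg k x' y else 0) +
  (if y is y'.+1 then (y <= x) * Rg k x y' else 0).
Proof.
move=> hy; rewrite /Rg (@big_tuple_rcons _ _ _ _ _ (fun s => (hdc x y s : nat))).
have E (t : seq (option 'I_B)) : \sum_(o : option 'I_B) (hdc x y (rcons t o) : nat) =
   (if x is x'.+1 then y.+1 * hdc x' y t else 0) +
   (if y is y'.+1 then (y <= x) * hdc x y' t else 0).
  rewrite big_optionT hdc_None addnC.
  under eq_bigr => d _ do rewrite hdc_Some.
  congr addn.
    by case: y hy => [|y] hy //=; case: (y < x); case: (hdc x y t).
  case: x => [|x] /=; first by rewrite big1_eq.
  rewrite -(@sum_le_ord y hy) big_distrl /=; apply: eq_bigr => d _.
  by case: (d <= y); case: (hdc x y t); rewrite ?muln0 ?muln1.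
rewrite (eq_bigr _ (fun (t : k.-tuple (option (ordinal B))) _ => E t)) big_split /=.
clear E; case: x => [|x]; case: y hy => [|y] hy; rewrite ?big1_eq ?big_distrr //=.
by rewrite big1.
Qed.

Lemma Rg0 x y : Rg 0 x y = (x == 0) && (y == 0).
Proof.
rewrite /Rg (@big_tuple0 _ _ _ _ (fun s => (hdc x y s : nat))) /hdc /=.
have -> : [forall i : 'I_1, hy ([::] : seq (option 'I_B)) i <= hx ([::] : seq (option 'I_B)) i].
  by apply/forallP => i; rewrite /hy /hx.
have -> : [forall i : 'I_0, if nth None ([::] : seq (option 'I_B)) i is Some d then (d <= hy ([::] : seq (option 'I_B)) i)%N else true].
  by apply/forallP => -[].
by rewrite /hx /hy /= andbT !(eq_sym 0).
Qed.

Lemma Rg_Rk k x y : y < B -> Rg k x y = Rk k x y.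
Proof.
elim: k x y => [|k IH] x y hy; first by rewrite Rg0.
rewrite Rg_rec //=; congr addn; first by case: x => // x; rewrite IH.
by case: y hy => // y hy; rewrite IH // ltnW.
Qed.

End HD.

Lemma rabE a b : rab a b = Rk (a + b) a b.
Proof.
rewrite -(@Rg_Rk b.+1) // /rab /Rg cardsE -sum1_card big_mkcond /=.
by apply: eq_bigr => t _; rewrite unfold_in /hdc; case: [&& _, _, _ & _].
Qed.

Lemma half_facts n m : (m <= n)%N -> ~~ odd (n + m) ->
  [/\ ((n + m)./2 + (n - m)./2 = n)%N, ((n + m)./2 - (n - m)./2 = m)%N
    & ((n - m)./2 <= (n + m)./2)%N].
Proof.
move=> hmn hodd.
have h1 := odd_double_half (n + m).
have h2 := odd_double_half (n - m).
have o2 : odd (n - m) = odd (n + m) by rewrite oddB // oddD; case: (odd n); case: (odd m).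
rewrite o2 (negbTE hodd) /= add0n in h2; rewrite (negbTE hodd) /= add0n in h1.
rewrite -!muln2 in h1 h2.
split; lia.
Qed.

Lemma part1 n m : (m <= n)%N -> ~~ odd (n + m) ->
  dnm n m = ((((n + m)./2)`!%:R)^-1 * (rab ((n + m)./2) ((n - m)./2))%:R)%R :> rat.
Proof.
move=> hmn hodd; have [e1 e2 e3] := @half_facts n m hmn hodd.
move: ((n + m)./2) ((n - m)./2) e1 e2 e3 => a b e1 e2 e3.
by rewrite dnmE -e2 DzRk // rabE e1 mulrC.
Qed.

Lemma part2 n m : odd (n + m) -> dnm n m = 0%R :> rat.
Proof. by move=> h; rewrite dnmE Dz_zero // h. Qed.

Lemma dnm_diag n : ((n`!)%:R * dnm (2 * n) 0 = (Rk (2 * n) n n)%:R :> rat)%R.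
Proof.
rewrite dnmE.
have := @DzRk (2 * n) n n; rewrite subnn => ->; try lia.
rewrite mulrC -mulrA mulVf ?mulr1 //.
by rewrite pnatr_eq0 -lt0n fact_gt0.
Qed.

Fixpoint beq (t1 t2 : btree) : bool :=
  match t1, t2 with
  | Leaf, Leaf => true
  | Node l r, Node l' r' => beq l l' && beq r r'
  | _, _ => false
  end.

Lemma beqP : Equality.axiom beq.
Proof.
elim=> [|l IHl r IHr] [|l' r'] /=; try by constructor.
case: (IHl l') => [->|ne]; last by constructor => -[].
case: (IHr r') => [->|ne]; last by constructor => -[].
by constructor.
Qed.

HB.instance Definition _ := hasDecEq.Build btree beqP.

Definition step (st : option (seq btree)) (c : bool) : option (seq btree) :=
  if st is Some s then
    (if c then (if s is r :: l :: rest then Some (Node l r :: rest) else None)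
     else Some (Leaf :: s))
  else None.

Definition run st w := foldl step st w.

Lemma run_None w : run None w = None.
Proof. by elim: w. Qed.

Lemma run_post t st w : run (Some st) (post t ++ w) = run (Some (t :: st)) w.
Proof.
elim: t st w => [|l IHl r IHr] st w //=.
by rewrite -!catA IHl IHr.
Qed.

Lemma run_inv st0 w st : run (Some st0) w = Some st ->
  flatten (map post (rev st)) = flatten (map post (rev st0)) ++ w.
Proof.
elim/last_ind: w st => [|w c IH] st; first by case=> ->; rewrite cats0.
rewrite /run foldl_rcons -/(run _ _).
case E: (run (Some st0) w) => [s|]; last by [].
have {}IH := IH _ E.
case: c => /=; last first.
  case=> <-; rewrite rev_cons map_rcons -cats1 flatten_cat IH /=.
  by rewrite -catA cats1.
case: s IH E => [|r [|l rest]] // IH E [<-].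
move: IH; rewrite !rev_cons !map_rcons -!cats1 !flatten_cat /= !cats0 => IH.
by rewrite [RHS]catA -IH -!catA.
Qed.

Lemma run_size st0 w st : run (Some st0) w = Some st ->
  (size st + count id w = size st0 + count negb w)%N.
Proof.
elim/last_ind: w st => [|w c IH] st; first by case=> ->.
rewrite /run foldl_rcons -/(run _ _).
case E: (run (Some st0) w) => [s|]; last by [].
have {}IH := IH _ E.
rewrite -cats1 !count_cat /=.
case: c => /=; last by case=> <- /=; lia.
case: s IH E => [|r [|l rest]] // IH E [<-] /=; move: IH => /=; lia.
Qed.

Lemma post_cons t : exists u, post t = false :: u.
Proof.
elim: t => [|l [u IHl] r _] /=; first by exists [::].
by rewrite IHl; eexists.
Qed.

Lemma count_post t : count id (post t) = bsize t /\ count negb (post t) = (bsize t).+1.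
Proof.
elim: t => [|l [h1 h2] r [h3 h4]] //=.
rewrite !count_cat /= h1 h2 h3 h4; lia.
Qed.

Definition dec (u : seq bool) : btree :=
  if run (Some [:: Leaf]) u is Some [:: t] then t else Leaf.
Definition goodw (u : seq bool) : bool :=
  if run (Some [:: Leaf]) u is Some [:: _] then true else false.

Lemma dec_post u : goodw u -> post (dec u) = false :: u.
Proof.
rewrite /goodw /dec; case E: run => [[|t [|]]|] // _.
by have := @run_inv _ _ _ E; rewrite /= !cats0.
Qed.

Lemma post_dec t u : post t = false :: u -> goodw u /\ dec u = t.
Proof.
move=> e; have := run_post t [::] [::]; rewrite cats0 e /=.
by rewrite /goodw /dec => ->.
Qed.

Definition okw x y (u : seq bool) : bool :=
  [&& run (Some [:: Leaf]) u != None, count negb u == x & count id u == y].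

Definition wt (u : seq bool) : nat :=
  \prod_(0 <= i < size u) (if nth true u i then 1 else (count id (take i u)).+1).

Lemma wt_rcons u c : wt (rcons u c) = wt u * (if c then 1 else (count id u).+1).
Proof.
rewrite /wt size_rcons big_nat_recr //= nth_rcons ltnn eqxx take_rcons_le //.
rewrite take_size; congr muln; apply: eq_big_nat => i /andP[_ hi].
by rewrite nth_rcons hi take_rcons_le // ltnW.
Qed.

Lemma okw_rcons u c x y : okw x y (rcons u c) =
  if c then [&& 0 < y, y <= x & okw x y.-1 u] else (0 < x) && okw x.-1 y u.
Proof.
rewrite /okw /run foldl_rcons -/(run _ _) -cats1 !count_cat /=.
case E: (run (Some [:: Leaf]) u) => [s|]; last by case: c; rewrite /= ?andbF.
have := @run_size _ _ _ E => /= hs.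
case: c => /=; last lia.
case: s E hs => [|r [|l rest]] E /= hs; lia.
Qed.

Definition G k x y := \sum_(u : k.-tuple bool) (if okw x y u then wt u else 0).

Lemma G_rec k x y : G k.+1 x y =
  (if x is x'.+1 then y.+1 * G k x' y else 0) +
  (if y is y'.+1 then (y <= x) * G k x y' else 0).
Proof.
rewrite /G (@big_tuple_rcons _ _ _ _ _ (fun u => if okw x y u then wt u else 0)).
have E (t : seq bool) : \sum_(c : bool) (if okw x y (rcons t c) then wt (rcons t c) else 0) =
   (if x is x'.+1 then y.+1 * (if okw x' y t then wt t else 0) else 0) +
   (if y is y'.+1 then (y <= x) * (if okw x y' t then wt t else 0) else 0).
  rewrite big_bool !okw_rcons !wt_rcons addnC.
  case: x => [|x]; case: y => [|y] /=; rewrite ?muln0 ?muln1 ?add0n ?addn0 //.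
  - case H: (okw x 0 t); last by [].
    by have /and3P[_ _ /eqP ->] := H; rewrite mul1n muln1.
  - congr addn.
      by case: (y < x.+1); case: (okw x.+1 y t); rewrite ?mul1n ?mul0n.
    case H: (okw x y.+1 t); last by rewrite muln0.
    by have /and3P[_ _ /eqP ->] := H; rewrite mulnC.
rewrite (eq_bigr _ (fun (t : k.-tuple bool) _ => E t)) big_split /=.
clear E; case: x => [|x]; case: y => [|y]; rewrite ?big1_eq -?big_distrr //=.
Qed.

Lemma G0 x y : G 0 x y = (x == 0) && (y == 0).
Proof.
rewrite /G (@big_tuple0 _ _ _ _ (fun u => if okw x y u then wt u else 0)) /okw /=.
by rewrite !(eq_sym 0); case: (x == 0); case: (y == 0); rewrite /wt big_nil.
Qed.

Lemma G_Rk k x y : G k x y = Rk k x y.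
Proof.
elim: k x y => [|k IH] x y; first by rewrite G0.
rewrite G_rec /=; congr addn; first by case: x => // x; rewrite IH.
by case: y => // y; rewrite IH.
Qed.

Definition cands t q :=
  [seq p <- iota 0 q | nth false (post t) p || (p == leftmost_pos t)].

Fixpoint cart (L : seq (seq nat)) : seq (seq nat) :=
  if L is l :: L' then [seq p :: r | p <- l, r <- cart L'] else [:: [::]].

Definition ptrs t := cart (map (cands t) (behead (leaf_pos t))).

Lemma mem_cart L r : (r \in cart L) = all2 (fun l p => p \in l) L r.
Proof.
elim: L r => [|l L IH] [|p r] //=.
- by apply/negP => /allpairsP [[a b] [_ _]].
- apply/allpairsP/andP => [[[a b] [ha hb /= [-> ->]]]|[hp hr]].
    by rewrite -IH.
  by exists (p, r); rewrite /= hp IH.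
Qed.

Lemma uniq_cart L : all uniq L -> uniq (cart L).
Proof.
elim: L => [|l L IH] //= /andP[ul uL].
apply: allpairs_uniq => //; first exact: IH.
by move=> [a b] [c d] _ _ /= [-> ->].
Qed.

Lemma size_cart L : size (cart L) = \prod_(l <- L) size l.
Proof. by elim: L => [|l L IH] /=; rewrite ?big_nil ?big_cons // size_allpairs IH. Qed.

Lemma all2_size (S T : Type) (r : S -> T -> bool) s t : all2 r s t -> size s = size t.
Proof. by elim: s t => [|x s IH] [|y t] //= /andP[_ /IH ->]. Qed.

Lemma all2_map_l (S S' T : Type) (f : S -> S') (r : S' -> T -> bool) s t :
  all2 r (map f s) t = all2 (fun x y => r (f x) y) s t.
Proof. by elim: s t => [|x s IH] [|y t] //=; rewrite IH. Qed.

Lemma eq_all2' (S T : Type) (r1 r2 : S -> T -> bool) s t :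
  (forall x y, r1 x y = r2 x y) -> all2 r1 s t = all2 r2 s t.
Proof. by move=> h; elim: s t => [|x s IH] [|y t] //=; rewrite IH h. Qed.

Lemma leftmost0 t : leftmost_pos t = 0.
Proof.
have [u e] := post_cons t.
by rewrite /leftmost_pos /leaf_pos e /=.
Qed.

Lemma mem_cands t q p :
  (p \in cands t q) = (p < q) && (nth false (post t) p || (p == leftmost_pos t)).
Proof. by rewrite mem_filter mem_iota /= add0n andbC. Qed.

Lemma behead_leaf_pos t u : post t = false :: u ->
  behead (leaf_pos t) = [seq i.+1 | i <- [seq i <- iota 0 (size u) | ~~ nth true u i]].
Proof.
move=> e; rewrite /leaf_pos e /=.
by rewrite -(addn0 1) iotaDl filter_map.
Qed.

Lemma count_nth_take u i : count (nth false u) (iota 0 i) = count id (take i u).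
Proof.
elim: i => [|i IH]; first by rewrite take0.
rewrite -addn1 iotaD count_cat IH /= addn0 add0n.
case: (ltnP i (size u)) => h.
  by rewrite addn1 (take_nth false h) -cats1 count_cat /= addn0.
by rewrite nth_default // !take_oversize ?addn0 //; lia.
Qed.

Lemma size_cands t u i : post t = false :: u ->
  size (cands t i.+1) = (count id (take i u)).+1.
Proof.
move=> e; rewrite size_filter leftmost0 e /= -(addn0 1) iotaDl count_map.
rewrite -count_nth_take add1n; congr S; apply: eq_count => j /=.
by rewrite orbF.
Qed.

Lemma size_ptrs u : goodw u -> size (ptrs (dec u)) = wt u.
Proof.
move=> g; have e := @dec_post u g.
rewrite /ptrs size_cart big_map (@behead_leaf_pos _ _ e) big_map big_filter.
rewrite /wt big_mkcond /index_iota subn0; apply: eq_bigr => i _.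
by rewrite (@size_cands _ _ i e); case: (nth true u i).
Qed.

Lemma goodw_okw u n : size u = (2 * n)%N -> goodw u = okw n n u.
Proof.
move=> hs; rewrite /goodw /okw.
have hc : count id u + count negb u = size u := count_predC id u.
case E: (run (Some [:: Leaf]) u) => [st|] //=.
have := @run_size _ _ _ E => /=.
case: st E => [|r [|l rest]] E /=; lia.
Qed.

Lemma In_mem (T : eqType) (x : T) s : List.In x s <-> x \in s.
Proof.
elim: s => [|y s IH] //=; rewrite inE; split.
  by case=> [->|/IH ->]; rewrite ?eqxx ?orbT.
by case/orP => [/eqP ->|/IH]; [left|right].
Qed.

Lemma uniq_NoDup (T : eqType) (s : seq T) : uniq s -> List.NoDup s.
Proof.
elim: s => [|x s IH] /=; first by constructor.
case/andP => nx us; constructor; last exact: IH.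
by move/In_mem; apply/negP.
Qed.

Definition Uw n : seq (seq bool) :=
  [seq u <- [seq tval t | t <- enum {: (2 * n).-tuple bool}] | goodw u].

Lemma mem_Uw n u : (u \in Uw n) = (size u == 2 * n) && goodw u.
Proof.
rewrite mem_filter andbC; congr andb.
apply/mapP/eqP => [[t _ ->]|h]; first by rewrite size_tuple.
by exists (Tuple (introT eqP h)); rewrite ?mem_enum.
Qed.

Lemma uniq_Uw n : uniq (Uw n).
Proof.
apply: filter_uniq; rewrite map_inj_uniq ?enum_uniq //.
exact: val_inj.
Qed.

Definition sl n : seq (btree * seq nat) :=
  [seq (dec u, p) | u <- Uw n, p <- ptrs (dec u)].

Lemma size_sl n : size (sl n) = Rk (2 * n) n n.
Proof.
rewrite size_allpairs_dep sumnE big_map.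
rewrite (eq_big_seq wt); last first.
  by move=> u; rewrite mem_Uw => /andP[_ g]; rewrite size_ptrs.
rewrite -G_Rk /G /Uw big_filter big_map big_mkcond big_enum /=.
by apply: eq_bigr => t _; rewrite (@goodw_okw t n) ?size_tuple.
Qed.

Lemma uniq_sl n : uniq (sl n).
Proof.
apply: allpairs_uniq_dep.
- exact: uniq_Uw.
- move=> u _; apply: uniq_cart; apply/allP => l /mapP [q _ ->].
  exact: filter_uniq (iota_uniq 0 q).
- move=> [u1 p1] [u2 p2] /allpairsPdep [x1 [y1 [hx1 _ [e1 _]]]].
  move=> /allpairsPdep [x2 [y2 [hx2 _ [e2 _]]]] /= [ed ep].
  subst x1 x2.
  move: hx1 hx2; rewrite !mem_Uw => /andP[_ g1] /andP[_ g2].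
  have := @dec_post u1 g1; rewrite ed (@dec_post u2 g2) => -[eu].
  by subst u2 p2.
Qed.

Lemma mem_sl n x : x \in sl n <-> is_relaxed n x.
Proof.
split.
  move=> /allpairsPdep [u [p [hu hp ->]]].
  move: hu; rewrite mem_Uw => /andP[/eqP hs g].
  have e := @dec_post u g.
  have := g; rewrite (@goodw_okw u n hs) => /and3P[_ _ /eqP hn].
  move: hp; rewrite /ptrs mem_cart all2_map_l => ha.
  split.
  - by have [c1 _] := count_post (dec u); rewrite -c1 e /=.
  - by rewrite (@all2_size _ _ _ _ _ ha).
  - by rewrite -(@eq_all2' _ _ _ _ (behead (leaf_pos (dec u))) p (fun q p => mem_cands (dec u) q p)).
move: x => [t p] [hn hsz ha].
have [u e] := post_cons t.
have [g dt] := @post_dec t u e.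
apply/allpairsPdep; exists u, p; split => //; last by rewrite dt.
  rewrite mem_Uw g andbT.
  have [c1 c2] := count_post t.
  have hc : count id (post t) + count negb (post t) = size (post t) :=
    count_predC id (post t).
  rewrite e /= in c1 c2 hc; rewrite -hn; apply/eqP; change (size u = 2 * bsize t); lia.
rewrite dt /ptrs mem_cart all2_map_l.
by rewrite (@eq_all2' _ _ _ _ (behead (leaf_pos t)) p (fun q p => mem_cands t q p)).
Qed.


Theorem corollary3p3 :
  (forall n m : nat, (m <= n)%N -> ~~ odd (n + m) ->
     dnm n m = ((((n + m)./2)`!%:R)^-1 * (rab ((n + m)./2) ((n - m)./2))%:R)%R :> rat)
  /\ (forall n m : nat, odd (n + m) -> dnm n m = 0%R :> rat)
  /\ (forall n : nat, exists s : list (btree * seq nat),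
        List.NoDup s /\ (forall x, List.In x s <-> is_relaxed n x) /\
        ((List.length s)%:R = (n`!)%:R * dnm (2 * n) 0 :> rat)%R).
Proof.
split; first exact: part1.
split; first exact: part2.
move=> n; exists (sl n); split; first exact: uniq_NoDup (uniq_sl n).
split.
  move=> x; split => h.
    by apply/mem_sl; apply/In_mem.
  by apply/In_mem; apply/mem_sl.
change ((size (sl n))%:R = (n`!)%:R * dnm (2 * n) 0 :> rat)%R.
by rewrite size_sl dnm_diag.
Qed.
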